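(* Let $\mathbb{K}$ be a field of characteristic $0$, let $F(n)$ be a holonomic sequence over $\mathbb{K}$, and let $L=\sum_{i=0}^{J}a_i(n)\sigma^i\in\operatorname{ann}F(n)$ be a nonzero operator. Then there exists a nonzero polynomial $p(n)\in\mathbb{K}[n]$ such that $p(n)F(n)$ is summable and \[\deg p(n)\le \deg L + C_L,\] where $\deg L$ is the degree of $L$ and $C_L$ is the continued zero index of $L$.
   Context: $\sigma$ is the shift operator, $\sigma(F(n))=F(n+1)$, and for $L=\sum_{i=0}^J a_i(n)\sigma^i\in\mathbb{K}[n][\sigma]$, $L(F(n))=\sum_{i=0}^J a_i(n)F(n+i)$. The annihilator is $\operatorname{ann}F(n)=\{L\in\mathbb{K}[n][\sigma]: L(F(n))=0\}$; $F$ is holonomic if $\operatorname{ann}F(n)\ne\{0\}$. The order $\operatorname{ord}F(n)$ is the minimal order $J$ of a nonzero element of $\operatorname{ann}F(n)$. A holonomic sequence $G(n)$ of order $J$ is summable if $G(n)=\Delta\big(\sum_{i=0}^{J-1}u_i(n)G(n+i)\big)$ for some rational functions $u_i(n)\in\mathbb{K}(n)$, where $\Delta=\sigma-1$. The adjoint of $L$ acts on polynomials by $L^*(x(n))=\sum_{i=0}^J a_i(n-i)x(n-i)$. Degree of $L$: put $b_k(n)=\sum_{j=k}^{J}\binom{j}{k}a_{J-j}(n+j-J)$ for $0\le k\le J$, and $\deg L=\max_{0\le k\le J}\{\deg b_k(n)-k\}$. Continued zero index $C_L$: if $L^*(1)\neq0$ then $C_L=0$; if $L^*(1)=0$ then $C_L$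 is the positive integer with $L^*(n^{C_L})\neq 0$ and $L^*(n^i)=0$ for $0\le i\le C_L-1$. *)

(* Defs.v *)
From mathcomp Require Import all_boot all_order all_algebra.
Set Implicit Arguments. Unset Strict Implicit. Unset Printing Implicit Defensive.
Import Order.TTheory GRing.Theory Num.Theory.
Local Open Scope ring_scope.

Section Holonomic.
Variable K : fieldType.

(* A sequence over K is a function nat -> K; its n-th term is F n, and
   the variable n is interpreted in K as n%:R.
   An operator L = \sum_{i=0}^J a_i(n) sigma^i in K[n][sigma] is represented
   by its coefficient list [:: a_0; ...; a_J] : seq {poly K}. *)
Definition op := seq {poly K}.

Definition apply_op (L : op) (G : nat -> K) (n : nat) : K :=
  \sum_(i < size L) (L`_i).[n%:R] * G (n + i)%N.

Definition in_ann (L : op) (G : nat -> K) : Prop := forall n, apply_op L G n = 0.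

Definition nonzero_op (L : op) : bool := has (fun a => a != 0) L.

Definition holonomic (G : nat -> K) : Prop :=
  exists L : op, nonzero_op L /\ in_ann L G.

(* ord G = J : minimal order of a nonzero element of ann G.  A nonzero
   operator written with nonzero leading coefficient (last 0 L != 0)
   has order (size L).-1. *)
Definition ord_seq (G : nat -> K) (J : nat) : Prop :=
  (exists L : op, last 0 L != 0 /\ size L = J.+1 /\ in_ann L G) /\
  (forall L : op, last 0 L != 0 -> in_ann L G -> (J <= (size L).-1)%N).

(* G of order J is summable if G(n) = Delta(\sum_{i<J} u_i(n) G(n+i)) with
   u_i = num_i / den_i rational functions; the identity is an identity of
   sequences, i.e. it holds for all sufficiently large n (this also avoids
   the finitely many poles of the u_i). *)
Definition summable (G : nat -> K) : Prop :=
  exists J : nat, ord_seq G J /\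
  exists (num den : 'I_J -> {poly K}), (forall i, den i != 0) /\
  let T := fun m : nat =>
     \sum_(i < J) (num i).[m%:R] / (den i).[m%:R] * G (m + i)%N in
  exists N : nat, forall n : nat, (N <= n)%N -> G n = T n.+1 - T n.

Definition adjoint (L : op) (x : {poly K}) : {poly K} :=
  \sum_(i < size L) ((L`_i * x) \Po ('X - (i%:R)%:P)).

Definition czi (L : op) (C : nat) : Prop :=
  adjoint L 'X^C != 0 /\ forall i : nat, (i < C)%N -> adjoint L 'X^i = 0.

Definition bcoef (L : op) (k : nat) : {poly K} :=
  let J := (size L).-1 in
  \sum_(k <= j < J.+1) ('C(j, k))%:R *: (L`_(J - j) \Po ('X + (j%:R - J%:R)%:P)).

(* deg L = max_{0<=k<=J} (deg b_k - k), with deg 0 = -oo: the maximum is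
   taken over the k with b_k != 0 (at least one exists for a nonzero L).
   The seed -(J+1) is strictly below every such term (deg b_k - k >= -J),
   so it plays the role of -oo and never affects the value. *)
Definition degL (L : op) : int :=
  let J := (size L).-1 in
  \big[Num.max / - (J.+1)%:Z]_(k < J.+1 | bcoef L k != 0)
     ((size (bcoef L k))%:Z - 1 - k%:Z).

End Holonomic.

(* Main.v *)
Require Import Defs.
From mathcomp Require Import all_boot all_order all_algebra.
From mathcomp Require Import zify ring.
From Stdlib Require Classical_Prop IndefiniteDescription.
Set Implicit Arguments. Unset Strict Implicit. Unset Printing Implicit Defensive.
Import Order.TTheory GRing.Theory Num.Theory.
Local Open Scope ring_scope.

Section Aux.
Variable K : fieldType.
Hypothesis charK0 : [pchar K] =i pred0.

Lemma natK_eq0 (n : nat) : (n%:R == 0 :> K) = (n == 0)%N.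
Proof. by move/pcharf0P: charK0. Qed.

Lemma natK_eq (m n : nat) : (m%:R == n%:R :> K) = (m == n).
Proof.
wlog le_mn : m n / (m <= n)%N.
  by move=> H; case: (leqP m n) => h; [|rewrite eq_sym [(m == n)]eq_sym]; apply: H => //; apply: ltnW.
rewrite -(subnKC le_mn) natrD -{1}(addr0 (m%:R)) (inj_eq (addrI _)) eq_sym natK_eq0.
by apply/idP/idP => /eqP h; apply/eqP; lia.
Qed.

Definition ev (P : nat -> Prop) := exists N, forall n, (N <= n)%N -> P n.

Lemma ev_mono (P Q : nat -> Prop) : ev P -> (forall n, P n -> Q n) -> ev Q.
Proof. by case=> N HN H; exists N => n /HN /H. Qed.

Lemma ev_and (P Q : nat -> Prop) : ev P -> ev Q -> ev (fun n => P n /\ Q n).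
Proof.
case=> N1 H1 [N2 H2]; exists (maxn N1 N2) => n; rewrite geq_max => /andP[a b].
by split; [apply: H1|apply: H2].
Qed.

Lemma ev_fin (m : nat) (P : nat -> nat -> Prop) :
  (forall i, (i < m)%N -> ev (P i)) -> ev (fun n => forall i, (i < m)%N -> P i n).
Proof.
elim: m => [|m IH] H; first by exists 0%N => n _ i.
have [N1 H1] := IH (fun i hi => H i (ltnW hi)).
have [N2 H2] := H m (ltnSn m).
exists (maxn N1 N2) => n; rewrite geq_max => /andP[a b] i; rewrite ltnS leq_eqVlt.
by case/orP=> [/eqP->|hi]; [apply: H2|apply: H1].
Qed.

Lemma ev_shift (P : nat -> Prop) k : ev P -> ev (fun n => P (n + k)%N).
Proof. by case=> N H; exists N => n hn; apply: H; apply: leq_trans hn (leq_addr _ _). Qed.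

Lemma poly_ev_nz (q : {poly K}) : q != 0 -> ev (fun n => q.[n%:R] != 0).
Proof.
have [m] := ubnP (size q); elim: m q => // m IH q Hs q0.
case: (Classical_Prop.classic (exists r : nat, q.[r%:R] = 0)); last first.
  move=> H; exists 0%N => n _; apply/eqP => h; apply: H; by exists n.
case=> r /eqP hr.
have /factor_theorem [q' Hq] : root q r%:R by [].
have q'0 : q' != 0 by apply: contraNneq q0 => e; rewrite Hq e mul0r.
have Hs' : (size q' < m)%N.
  move: Hs; rewrite Hq size_mul ?polyXsubC_eq0 // size_XsubC.
  by rewrite addn2 /= ltnS.
have [N HN] := IH q' Hs' q'0.
exists (maxn N r.+1) => n; rewrite geq_max => /andP[a b].
rewrite Hq hornerM hornerXsubC mulf_neq0 ?HN // subr_eq0 natK_eq.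
by apply/eqP => e; move: b; rewrite e ltnn.
Qed.

Definition erat (c : nat -> K) := exists num den : {poly K}, den != 0 /\
  ev (fun n => c n = num.[n%:R] / den.[n%:R]).

Lemma erat_ext c c' : ev (fun n => c n = c' n) -> erat c' -> erat c.
Proof.
move=> E [a [b [b0 H]]]; exists a, b; split => //.
by apply: (ev_mono (ev_and E H)) => n [-> ->].
Qed.

Lemma erat_poly (q : {poly K}) : erat (fun n => q.[n%:R]).
Proof. exists q, 1; split; first exact: oner_neq0. by exists 0%N => n _; rewrite hornerC divr1. Qed.

Lemma erat_cst (a : K) : erat (fun _ => a).
Proof. apply: erat_ext (erat_poly a%:P); exists 0%N => n _; by rewrite hornerC. Qed.

Lemma erat_inv (q : {poly K}) : q != 0 -> erat (fun n => (q.[n%:R])^-1).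
Proof. move=> q0; exists 1, q; split => //; exists 0%N => n _; by rewrite hornerC div1r. Qed.

Lemma erat_add c d : erat c -> erat d -> erat (fun n => c n + d n).
Proof.
move=> [a [b [b0 Hc]]] [a' [b' [b0' Hd]]].
exists (a * b' + a' * b), (b * b'); split; first by rewrite mulf_neq0.
have := ev_and (ev_and Hc Hd) (ev_and (poly_ev_nz b0) (poly_ev_nz b0')).
move=> HH; apply: (ev_mono HH) => n [[-> ->] [h1 h2]].
rewrite !hornerE; field; by rewrite h1 h2.
Qed.

Lemma erat_mul c d : erat c -> erat d -> erat (fun n => c n * d n).
Proof.
move=> [a [b [b0 Hc]]] [a' [b' [b0' Hd]]].
exists (a * a'), (b * b'); split; first by rewrite mulf_neq0.
have := ev_and (ev_and Hc Hd) (ev_and (poly_ev_nz b0) (poly_ev_nz b0')).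
move=> HH; apply: (ev_mono HH) => n [[-> ->] [h1 h2]].
rewrite !hornerM; field; by rewrite h1 h2.
Qed.

Lemma erat_shift c k : erat c -> erat (fun n => c (n + k)%N).
Proof.
move=> [a [b [b0 Hc]]].
exists (a \Po ('X + k%:R%:P)), (b \Po ('X + k%:R%:P)); split.
  by rewrite comp_poly2_eq0 ?size_XaddC.
apply: (ev_mono (ev_shift k Hc)) => n ->.
by rewrite !horner_comp !hornerE natrD.
Qed.

Lemma erat_sum m (c : nat -> nat -> K) : (forall i, (i < m)%N -> erat (c i)) ->
  erat (fun n => \sum_(i < m) c i n).
Proof.
elim: m => [|m IH] H.
  apply: erat_ext (erat_cst 0); by exists 0%N => n _; rewrite big_ord0.
apply: erat_ext (erat_add (IH (fun i hi => H i (ltnW hi))) (H m (ltnSn m))).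
by exists 0%N => n _; rewrite big_ord_recr.
Qed.


Definition lin (G : nat -> K) (m : nat) (T : nat -> K) :=
  exists f : nat -> nat -> K, (forall i, erat (f i)) /\
    ev (fun n => T n = \sum_(i < m) f i n * G (n + i)%N).

Lemma lin_ext G m T T' : ev (fun n => T n = T' n) -> lin G m T' -> lin G m T.
Proof.
move=> E [f [Hf H]]; exists f; split => //.
by apply: (ev_mono (ev_and E H)) => n [-> ->].
Qed.

Lemma lin_add G m T T' : lin G m T -> lin G m T' -> lin G m (fun n => T n + T' n).
Proof.
move=> [f [Hf H]] [f' [Hf' H']]; exists (fun i n => f i n + f' i n); split.
  by move=> i; apply: erat_add.
apply: (ev_mono (ev_and H H')) => n [-> ->].
by rewrite -big_split /=; apply: eq_bigr => i _; rewrite mulrDl.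
Qed.

Lemma lin_scale G m T e : erat e -> lin G m T -> lin G m (fun n => e n * T n).
Proof.
move=> He [f [Hf H]]; exists (fun i n => e n * f i n); split.
  by move=> i; apply: erat_mul.
apply: (ev_mono H) => n ->.
by rewrite mulr_sumr; apply: eq_bigr => i _; rewrite mulrA.
Qed.

Lemma lin_zero G m : lin G m (fun _ => 0).
Proof.
exists (fun _ _ => 0); split; first by move=> i; apply: erat_cst.
by exists 0%N => n _; rewrite big1 // => i _; rewrite mul0r.
Qed.

Lemma lin_sum G m k (T : nat -> nat -> K) : (forall i, (i < k)%N -> lin G m (T i)) ->
  lin G m (fun n => \sum_(i < k) T i n).
Proof.
elim: k => [|k IH] H.
  apply: lin_ext (lin_zero G m); by exists 0%N => n _; rewrite big_ord0.
apply: lin_ext (lin_add (IH (fun i hi => H i (ltnW hi))) (H k (ltnSn k))).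
by exists 0%N => n _; rewrite big_ord_recr.
Qed.

Lemma lin_single G m k : (k < m)%N -> lin G m (fun n => G (n + k)%N).
Proof.
move=> km; exists (fun i _ => if i == k then 1 else 0); split.
  by move=> i; apply: erat_cst.
exists 0%N => n _.
rewrite (bigD1 (Ordinal km)) //= eqxx mul1r big1 ?addr0 // => i /negPf.
by rewrite -(inj_eq val_inj) /= => ->; rewrite mul0r.
Qed.


Lemma lin_shift G (M : op K) r : last 0 M != 0 -> size M = r.+1 -> in_ann M G ->
  forall k, lin G r (fun n => G (n + k)%N).
Proof.
move=> Ml Ms Ma; have Mr : M`_r = last 0 M by rewrite -nth_last Ms.
elim/ltn_ind => k IH.
case: (ltnP k r) => kr; first exact: lin_single.
set s := (k - r)%N.
have ks : k = (s + r)%N by rewrite subnK.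
pose T' := fun n => \sum_(i < r) ((- M`_i).[(n + s)%N%:R] * ((M`_r).[(n + s)%N%:R])^-1)
   * G (n + (s + i))%N.
apply: (lin_ext (T' := T')).
  have : ev (fun n => (M`_r).[(n + s)%N%:R] != 0).
    by apply: (ev_shift (P := fun n => (M`_r).[n%:R] != 0)); apply: poly_ev_nz; rewrite Mr.
  move=> HH; apply: (ev_mono HH) => n hn.
  have := Ma (n + s)%N; rewrite /apply_op Ms big_ord_recr /= => E.
  rewrite /T'.
  have -> : \sum_(i < r) ((- M`_i).[(n + s)%N%:R] * ((M`_r).[(n + s)%N%:R])^-1)
   * G (n + (s + i))%N = - (\sum_(i < r) (M`_i).[(n + s)%N%:R] * G (n + s + i)%N)
       / (M`_r).[(n + s)%N%:R].
    rewrite mulNr mulr_suml -sumrN; apply: eq_bigr => i _.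
    by rewrite hornerN addnA; ring.
  have -> : (\sum_(i < r) (M`_i).[(n + s)%N%:R] * G (n + s + i)%N) =
     - ((M`_r).[(n + s)%N%:R] * G (n + s + r)%N) by apply/eqP; rewrite -addr_eq0 E.
  by rewrite opprK mulrAC divff // mul1r ks addnA.
apply: (lin_sum (T := fun (i : nat) n => ((- M`_i).[(n + s)%N%:R] * ((M`_r).[(n + s)%N%:R])^-1)
   * G (n + (s + i))%N)) => i ir.
apply: (lin_scale (T := fun n => G (n + (s + i))%N)).
  apply: (erat_shift (c := fun n => (- M`_i).[n%:R] * ((M`_r).[n%:R])^-1)).
  by apply: erat_mul; [apply: erat_poly|apply: erat_inv; rewrite Mr].
by apply: IH; rewrite ks ltn_add2l.
Qed.

Lemma lin_reduce G (M : op K) r m T : last 0 M != 0 -> size M = r.+1 -> in_ann M G ->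
  lin G m T -> lin G r T.
Proof.
move=> Ml Ms Ma [f [Hf H]]; apply: lin_ext H _.
apply: (lin_sum (T := fun (i : nat) n => f i n * G (n + i)%N)) => i _.
apply: (lin_scale (T := fun n => G (n + i)%N)) => //.
exact: lin_shift Ml Ms Ma i.
Qed.


Lemma apply_opE (L : op K) G n :
  apply_op L G n = \sum_(0 <= i < size L) (L`_i).[n%:R] * G (n + i)%N.
Proof. by rewrite /apply_op big_mkord. Qed.

Lemma lin_transfer (p : {poly K}) F m T : p != 0 -> lin F m T ->
  lin (fun n => p.[n%:R] * F n) m T.
Proof.
move=> p0 [f [Hf H]].
exists (fun i n => f i n * (p.[(n + i)%N%:R])^-1); split.
  move=> i; apply: erat_mul => //.
  exact: (erat_shift (c := fun n => (p.[n%:R])^-1)) (erat_inv p0).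
have [N HN] := poly_ev_nz p0.
have Hp : ev (fun n => forall i, p.[(n + i)%N%:R] != 0).
  by exists N => n hn i; apply: HN; apply: leq_trans hn (leq_addr _ _).
apply: (ev_mono (ev_and H Hp)) => n [-> hn].
apply: eq_bigr => i _; rewrite -!mulrA; congr (_ * _).
by rewrite mulrA mulVf ?mul1r.
Qed.

Lemma ord_exists G : (exists L : op K, last 0 L != 0 /\ in_ann L G) ->
  exists J, ord_seq G J.
Proof.
case=> L [Ll La].
have Ls : (0 < size L)%N by case: L Ll La => //=; rewrite eqxx.
suff H : forall m, (exists L : op K, [/\ last 0 L != 0, size L = m.+1 & in_ann L G]) ->
  exists J, ord_seq G J.
  by apply: (H (size L).-1); exists L; split => //; rewrite prednK.
elim/ltn_ind => m IH [L1 [L1l L1s L1a]].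
case: (Classical_Prop.classic (exists L' : op K,
   [/\ last 0 L' != 0, in_ann L' G & ((size L').-1 < m)%N])).
  case=> L' [L'l L'a L's]; apply: (IH _ L's); exists L'; split => //.
  by rewrite prednK //; case: L' L'l L'a L's => //=; rewrite eqxx.
move=> Hn; exists m; split; first by exists L1.
move=> L' L'l L'a; rewrite leqNgt; apply/negP => h; apply: Hn; by exists L'.
Qed.

Lemma ann_transfer (L : op K) F (p : {poly K}) : p != 0 -> last 0 L != 0 ->
  in_ann L F -> exists L' : op K, last 0 L' != 0 /\ in_ann L' (fun n => p.[n%:R] * F n).
Proof.
move=> p0 Ll La.
set S := size L.
have Ls : (0 < S)%N by rewrite /S; case: (L) Ll => //=; rewrite eqxx.
pose Q (i : nat) := \prod_(j < S | (j : nat) != i) (p \Po ('X + (j%:R)%:P)).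
have Q0 : forall i, Q i != 0.
  move=> i; apply/prodf_neq0 => j _; by rewrite comp_poly2_eq0 ?size_XaddC.
exists (mkseq (fun i => L`_i * Q i) S); split.
  rewrite -nth_last size_mkseq nth_mkseq ?prednK // mulf_neq0 //.
  by rewrite /S nth_last.
move=> n; rewrite apply_opE size_mkseq.
have -> : \sum_(0 <= i < S) ((mkseq (fun i => L`_i * Q i) S)`_i).[n%:R] * (p.[(n + i)%N%:R] * F (n + i)%N)
  = (\prod_(j < S) p.[(n + j)%N%:R]) * apply_op L F n.
  rewrite apply_opE mulr_sumr big_nat_cond [in RHS]big_nat_cond.
  apply: eq_bigr => i /andP[/andP[_ iS] _].
  rewrite nth_mkseq // hornerM (bigD1 (Ordinal iS)) //= horner_prod.
  rewrite (eq_bigl (fun j : 'I_S => (j : nat) != i)); last first.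
    by move=> j; rewrite -(inj_eq val_inj).
  rewrite (eq_bigr (fun j : 'I_S => p.[(n + j)%N%:R])); last first.
    by move=> j _; rewrite horner_comp hornerD hornerX hornerC natrD.
  ring.
by rewrite La mulr0.
Qed.

Definition T0 (L : op K) (x : {poly K}) (F : nat -> K) (n : nat) :=
  - \sum_(i < size L) \sum_(k < i) ((L`_i * x).[n%:R - i%:R + k%:R] * F (n + k)%N).

Lemma telescope_adj (L : op K) F x : in_ann L F ->
  forall n, (adjoint L x).[n%:R] * F n = T0 L x F n.+1 - T0 L x F n.
Proof.
move=> La n; rewrite /T0 opprK addrC -opprB -sumrB.
have E : forall i : nat,
  \sum_(k < i) ((L`_i * x).[n.+1%:R - i%:R + k%:R] * F (n.+1 + k)%N) -
  \sum_(k < i) ((L`_i * x).[n%:R - i%:R + k%:R] * F (n + k)%N) =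
  (L`_i * x).[n%:R] * F (n + i)%N - (L`_i * x).[n%:R - i%:R] * F n.
  move=> i; rewrite -sumrB.
  rewrite -(big_mkord (fun _ => true) (fun k => (L`_i * x).[n.+1%:R - i%:R + k%:R] * F (n.+1 + k)%N -
     (L`_i * x).[n%:R - i%:R + k%:R] * F (n + k)%N)).
  rewrite (@telescope_sumr_eq _ 0 i (fun k => (L`_i * x).[n%:R - i%:R + k%:R] * F (n + k)%N)) //.
    by rewrite subrK addr0 addn0.
  move=> k _ /=; rewrite addSn addnS.
  congr (_ * _ - _); congr (_.[_]).
  by rewrite -[n.+1]addn1 -[k.+1]addn1 !natrD; ring.
rewrite (eq_bigr (fun i : 'I_(size L) => (L`_i * x).[n%:R] * F (n + i)%N - (L`_i * x).[n%:R - i%:R] * F n)); last by move=> i _; rewrite E.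
rewrite sumrB.
have -> : \sum_(i < size L) (L`_i * x).[n%:R] * F (n + i)%N = x.[n%:R] * apply_op L F n.
  rewrite /apply_op mulr_sumr; apply: eq_bigr => i _; rewrite hornerM; ring.
rewrite La mulr0 sub0r opprK -mulr_suml /adjoint horner_sum; congr (_ * _).
by apply: eq_bigr => i _; rewrite horner_comp hornerXsubC.
Qed.

Lemma lin_T0 (L : op K) x F : lin F (size L) (T0 L x F).
Proof.
rewrite /T0.
apply: (lin_ext (T' := fun n => (-1) * \sum_(i < size L) \sum_(k < i)
   ((L`_i * x).[n%:R - i%:R + k%:R] * F (n + k)%N))).
  by exists 0%N => n _; rewrite mulN1r.
apply: lin_scale; first exact: erat_cst.
apply: (lin_sum (T := fun (i : nat) n => \sum_(k < i)
   ((L`_i * x).[n%:R - i%:R + k%:R] * F (n + k)%N))) => i iS.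
apply: (lin_sum (T := fun (k : nat) n =>
   (L`_i * x).[n%:R - i%:R + k%:R] * F (n + k)%N)) => k ki.
apply: (lin_scale (T := fun n => F (n + k)%N)).
  apply: (erat_ext _ (erat_poly ((L`_i * x) \Po ('X + (k%:R - i%:R)%:P)))).
  exists 0%N => n _; rewrite horner_comp hornerD hornerX hornerC; congr (_.[_]); ring.
by apply: lin_single; apply: ltn_trans ki iS.
Qed.

Definition dpo (x : {poly K}) (k : nat) : {poly K} :=
  iter k (fun q => q \Po ('X + 1%:P) - q) x.
Arguments dpo : simpl never.

Lemma size_delta (q : {poly K}) : (size (q \Po ('X + 1%:P) - q)%R <= (size q).-1)%N.
Proof.
have [->|q0] := eqVneq q 0; first by rewrite comp_poly0 subr0 size_poly0.
have Hs : size (q \Po ('X + 1%:P)) = size q by rewrite size_comp_poly2 ?size_XaddC.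
apply/leq_sizeP => j hj; rewrite coefB.
case: (ltnP j (size q)) => hjq.
  have sq : (0 < size q)%N by rewrite size_poly_gt0.
  have -> : j = (size q).-1.
    by lia.
  have := lead_coef_comp q (q := 'X + 1%:P); rewrite size_XaddC lead_coefXaddC expr1n mulr1 => /(_ isT).
  by rewrite /lead_coef Hs => ->; rewrite subrr.
by rewrite !nth_default ?subrr ?Hs.
Qed.

Lemma size_dpo x k : (size (dpo x k) <= size x - k)%N.
Proof.
elim: k => [|k IH]; first by rewrite subn0.
rewrite /dpo iterS -/(dpo x k).
apply: leq_trans (size_delta _) _; rewrite subnS; move: IH; lia.
Qed.

Lemma dpoS x k : dpo x k.+1 = dpo x k \Po ('X + 1%:P) - dpo x k.
Proof. by []. Qed.

Lemma D2a x j : x \Po ('X + (j%:R)%:P) = \sum_(0 <= k < j.+1) 'C(j, k)%:R *: dpo x k.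
Proof.
elim: j => [|j IH].
  by rewrite big_nat1 polyC0 addr0 comp_polyXr bin0 scale1r.
have -> : 'X + (j.+1%:R)%:P = ('X + (j%:R)%:P) \Po ('X + 1%:P) :> {poly K}.
  by rewrite comp_polyD comp_polyX comp_polyC -addn1 natrD polyCD; ring.
rewrite comp_polyA IH linear_sum /=.
rewrite (eq_bigr (fun k => 'C(j, k)%:R *: (dpo x k + dpo x k.+1))); last first.
  by move=> k _; rewrite linearZ /= dpoS (addrC (dpo x k)) subrK.
rewrite (big_nat_recl _ _ _ (leq0n j.+1)) bin0 scale1r.
have -> : \sum_(0 <= k < j.+1) 'C(j.+1, k.+1)%:R *: dpo x k.+1 =
   \sum_(0 <= k < j.+1) 'C(j, k.+1)%:R *: dpo x k.+1 + \sum_(0 <= k < j.+1) 'C(j, k)%:R *: dpo x k.+1.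
  by rewrite -big_split; apply: eq_bigr => k _ /=; rewrite binS natrD scalerDl.
have -> : \sum_(0 <= k < j.+1) 'C(j, k)%:R *: (dpo x k + dpo x k.+1) =
   \sum_(0 <= k < j.+1) 'C(j, k)%:R *: dpo x k + \sum_(0 <= k < j.+1) 'C(j, k)%:R *: dpo x k.+1.
  by rewrite -big_split; apply: eq_bigr => k _ /=; rewrite scalerDr.
rewrite addrA; congr (_ + _).
rewrite (big_nat_recl _ _ _ (leq0n j)) bin0 scale1r; congr (_ + _).
by rewrite (big_nat_recr _ _ _ (leq0n j)) /= bin_small // scale0r addr0.
Qed.

Lemma D2 x j M : (j < M)%N -> x \Po ('X + (j%:R)%:P) = \sum_(0 <= k < M) 'C(j, k)%:R *: dpo x k.
Proof.
move=> jM; rewrite D2a (big_cat_nat (leq0n j.+1) jM) /=.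
rewrite [X in _ = _ + X](_ : _ = 0) ?addr0 //.
rewrite big_nat_cond big1 // => k /andP[/andP[hk _] _].
by rewrite bin_small // scale0r.
Qed.

Lemma D3 (L : op K) x : (0 < size L)%N ->
  adjoint L x = \sum_(0 <= k < size L) bcoef L k * (dpo x k \Po ('X - (((size L).-1)%:R)%:P)).
Proof.
move=> Ls.
have [J SJ] : exists J, size L = J.+1 by exists (size L).-1; rewrite prednK.
rewrite /adjoint /bcoef SJ /=.
rewrite -(big_mkord (fun _ => true) (fun i => (L`_i * x) \Po ('X - (i%:R)%:P))).
rewrite big_nat_rev /=.
pose A i := L`_(J - i) \Po ('X + (i%:R - J%:R)%:P).
pose e k := dpo x k \Po ('X - (J%:R)%:P).
rewrite big_nat_cond.
rewrite (eq_bigr (fun i => \sum_(0 <= k < J.+1) 'C(i, k)%:R *: (A i * e k))); last first.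
  move=> i /andP[/andP[_ iJ] _]; rewrite add0n subSS.
  have iJ' : (i <= J)%N by rewrite -ltnS.
  have -> : 'X - ((J - i)%:R)%:P = 'X + (i%:R - J%:R)%:P :> {poly K}.
    by rewrite natrB // -[i%:R - J%:R]opprB polyCN.
  rewrite comp_polyM -/(A i).
  have -> : x \Po ('X + (i%:R - J%:R)%:P) = (x \Po ('X + (i%:R)%:P)) \Po ('X - (J%:R)%:P).
    rewrite -comp_polyA; congr (_ \Po _).
    by rewrite comp_polyD comp_polyX comp_polyC polyCB; ring.
  rewrite (D2 x iJ) linear_sum mulr_sumr; apply: eq_bigr => k _.
  by rewrite linearZ /= scalerAr.
rewrite -big_nat_cond exchange_big /=; apply: eq_big_nat => k /andP[_ kJ].
rewrite mulr_suml (big_cat_nat (leq0n k) (ltnW kJ)) /=.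
rewrite [X in X + _](_ : _ = 0) ?add0r.
  by apply: eq_bigr => j _; rewrite -scalerAl.
rewrite big_nat_cond big1 // => j /andP[/andP[_ jk] _].
by rewrite bin_small // scale0r.
Qed.

Lemma degL_ge (L : op K) k : (k < (size L).-1.+1)%N -> bcoef L k != 0 ->
  (size (bcoef L k))%:Z - 1 - k%:Z <= degL L.
Proof.
move=> kJ bk; rewrite /degL (bigD1 (Ordinal kJ)) //=.
by rewrite le_max lexx.
Qed.

Lemma deg_bound (L : op K) C : (0 < size L)%N -> adjoint L 'X^C != 0 ->
  (size (adjoint L 'X^C))%:Z - 1 <= degL L + C%:Z.
Proof.
move=> Ls p0.
suff : adjoint L 'X^C == 0 \/ (size (adjoint L 'X^C))%:Z - 1 <= degL L + C%:Z.
  by case=> // /eqP e; move: p0; rewrite e eqxx.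
rewrite D3 // big_nat_cond.
apply: (big_ind (fun q : {poly K} => q == 0 \/ (size q)%:Z - 1 <= degL L + C%:Z)).
- by left.
- move=> a b [/eqP->|ha]; first by rewrite add0r.
  case=> [/eqP->|hb]; first by rewrite addr0; right.
  right; have := size_polyD a b; move: ha hb; move: (size a) (size b) (size (a + b)) (degL L) => sa sb sab D. lia.
move=> k /andP[/andP[_ kJ] _].
have [->|bk] := eqVneq (bcoef L k) 0; first by left; rewrite mul0r.
set e := dpo _ k \Po _.
have [->|e0] := eqVneq e 0; first by left; rewrite mulr0.
right.
have h1 := size_polyMleq (bcoef L k) e.
have h2 : (size e <= C.+1 - k)%N.
  by rewrite /e size_comp_poly2 ?size_XsubC // -(size_polyXn K C) size_dpo.
have h3 : (0 < size e)%N by rewrite size_poly_gt0.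
have kJ' : (k < (size L).-1.+1)%N by rewrite prednK.
have h4 := degL_ge kJ' bk.
move: h1 h2 h3 h4; move: (size e) (size (bcoef L k)) (size (bcoef L k * e)) (degL L) => se sb sq D.
lia.
Qed.
End Aux.

Lemma fchoice (A : Type) (a0 : A) (P : nat -> A -> Prop) :
  (forall i, exists x, P i x) -> exists g : nat -> A, forall i, P i (g i).
Proof.
move=> H.
exists (fun i => proj1_sig (IndefiniteDescription.constructive_indefinite_description _ (H i))).
move=> i; exact: proj2_sig (IndefiniteDescription.constructive_indefinite_description _ (H i)).
Qed.

Unset Implicit Arguments.

Theorem theorem2p1 (K : fieldType) (charK0 : [pchar K] =i pred0)
  (F : nat -> K) (holF : holonomic F)
  (L : op K) (L_lead : last 0 L != 0) (L_ann : in_ann L F)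
  (C : nat) (HC : czi L C) :
  exists p : {poly K}, p != 0 /\
    summable (fun n : nat => p.[n%:R] * F n) /\
    (size p)%:Z - 1 <= degL L + C%:Z.
Proof.
case: HC => p0 _.
have Ls : (0 < size L)%N by case: (L) L_lead => //=; rewrite eqxx.
exists (adjoint L 'X^C); split => //; split; last exact: deg_bound.
set p := adjoint L 'X^C.
set G := fun n => p.[n%:R] * F n.
have [L' [L'l L'a]] := ann_transfer p0 L_lead L_ann.
have [r ord] := ord_exists (ex_intro _ L' (conj L'l L'a)).
exists r; split => //.
case: ord => [[M [Ml [Ms Ma]]] _].
have [f [Hf Hev]] := lin_reduce charK0 Ml Ms Ma (lin_transfer charK0 p0 (lin_T0 charK0 L 'X^C F)).
have HH : forall i, exists t : ({poly K} * {poly K} * nat)%type,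
  t.1.2 != 0 /\ forall n, (t.2 <= n)%N -> f i n = t.1.1.[n%:R] / t.1.2.[n%:R].
  move=> i; have [a [b [b0 [N HN]]]] := Hf i; by exists (a, b, N).
have [g hg] := fchoice (0, 0, 0%N) HH.
exists (fun i : 'I_r => (g i).1.1), (fun i : 'I_r => (g i).1.2); split.
  by move=> i; case: (hg i).
case: Hev => N0 HN0.
have [Nm hNm] : exists Nm, forall i : 'I_r, ((g i).2 <= Nm)%N.
  exists (\max_(i < r) (g i).2)%N => i; by rewrite (bigD1 i) //= leq_maxl.
exists (maxn N0 Nm) => n; rewrite geq_max => /andP[h1 h2].
have E : forall m, (n <= m)%N -> T0 L 'X^C F m =
   \sum_(i < r) (g i).1.1.[m%:R] / (g i).1.2.[m%:R] * G (m + i)%N.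
  move=> m nm; rewrite HN0; last exact: leq_trans h1 nm.
  apply: eq_bigr => i _; congr (_ * _); case: (hg i) => _ -> //.
  by apply: leq_trans nm; apply: leq_trans h2.
rewrite /G telescope_adj // -/G -E // -E //.
Qed.
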